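(* Let $p$ be prime, $G=\mathbb{Z}_{p^2}\times\mathbb{Z}_p$, $c\in\mathbb{Z}_p$, and let $y_{ij},z_{ij}\in\mathbb{Z}_p$ ($0\le i,j\le p-1$) satisfy $y_{ij}+cz_{ij}\equiv j\pmod p$. Then the set $B=\{(i+py_{ij},z_{ij}):0\le i,j\le p-1\}\subset G$ is a tile of $G$ and also a spectral set.
   Context: Elements of $\mathbb{Z}_p$ are represented by $\{0,\dots,p-1\}$ and $i+py_{ij}$ is read in $\mathbb{Z}_{p^2}$. For $b=(b_1,b_2)\in G$ let $\chi_b(a_1,a_2)=e^{2\pi i(a_1b_1/p^2+a_2b_2/p)}$. $B$ is a spectral set if there is $\Lambda\subset G$ with $\{\chi_\lambda|_B:\lambda\in\Lambda\}$ an orthogonal basis of $L^2(B)$ (counting measure). $B$ is a tile if there is $T\subset G$ with $B\oplus T=G$ (every element of $G$ uniquely $b+t$, $b\in B,t\in T$). *)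

(* Defs.v *)
From HB Require Import structures.
From mathcomp Require Import all_boot all_order all_algebra all_field.
Set Implicit Arguments. Unset Strict Implicit. Unset Printing Implicit Defensive.
Import Order.TTheory GRing.Theory Num.Theory.
Local Open Scope ring_scope.

(* e^{2 pi i / n} in algC: n.-root (-1) is e^{i pi / n} (minimal nonnegative argument). *)
Definition eC (n : nat) : algC := (n.-root (-1)) ^+ 2.

Definition Gp (p : nat) : finType := ('Z_(p ^ 2) * 'Z_p)%type.

(* chi_b(a) = exp(2 pi i (a1 b1 / p^2 + a2 b2 / p)) = e(p^2)^(a1 b1 + p a2 b2). *)
Definition chi (p : nat) (b a : Gp p) : algC :=
  eC (p ^ 2) ^+ ((a.1 : nat) * (b.1 : nat) + p * ((a.2 : nat) * (b.2 : nat)))%N.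

Definition is_tile (p : nat) (B : {set Gp p}) : Prop :=
  exists T : {set Gp p}, forall g : Gp p,
    exists! bt : Gp p * Gp p, [/\ bt.1 \in B, bt.2 \in T & g = bt.1 + bt.2].

(* B is spectral: there is Lambda with {chi_l|_B : l in Lambda} an orthogonal
   basis of L^2(B) (counting measure): pairwise orthogonal (distinct l),
   linearly independent, and spanning all functions on B. *)
Definition is_spectral (p : nat) (B : {set Gp p}) : Prop :=
  exists L : {set Gp p},
    [/\ (forall l l', l \in L -> l' \in L -> l != l' ->
           \sum_(b in B) chi l b * (chi l' b)^* = 0),
        (forall a : Gp p -> algC,
           (forall b, b \in B -> \sum_(l in L) a l * chi l b = 0) ->
           forall l, l \in L -> a l = 0)
      & (forall f : Gp p -> algC, exists a : Gp p -> algC,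
           forall b, b \in B -> f b = \sum_(l in L) a l * chi l b)].

Definition Bset (p : nat) (y z : 'I_p -> 'I_p -> 'Z_p) : {set Gp p} :=
  [set ((((i : nat) + p * (y i j : nat))%N)%:R : 'Z_(p ^ 2), z i j)
     | i : 'I_p, j : 'I_p].

(* Main.v *)
Require Import Defs.
From HB Require Import structures.
From mathcomp Require Import all_boot all_order all_algebra all_field.
From mathcomp Require Import ring lra zify.
Import Order.TTheory GRing.Theory Num.Theory.
Set Implicit Arguments. Unset Strict Implicit. Unset Printing Implicit Defensive.
Local Open Scope ring_scope.

Lemma sq_le (R : realFieldType) (x y : R) : 0 <= x -> 0 <= y -> x^+2 <= y^+2 -> x <= y.
Proof. move=> hx hy h. by rewrite -(ler_pXn2r (n:=2)) // nnegrE. Qed.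

Lemma G1 (R : realFieldType) (a1 a2 b1 b2 : R) :
  a1^+2 + a2^+2 = 1 -> b1^+2 + b2^+2 = 1 -> 0 <= a2 -> 0 <= b2 -> b1 <= a1 ->
  0 <= a1*b2 - b1*a2.
Proof.
move=> ha hb ha2 hb2 hab.
have [hb1|hb1] := lerP 0 b1.
  have h : a2 <= b2 by apply: sq_le => //; nra.
  nra.
have [ha1|ha1] := lerP 0 a1.
  nra.
have h : b2 <= a2 by apply: sq_le => //; nra.
nra.
Qed.

Lemma G3 (R : realFieldType) (a1 a2 b1 b2 : R) :
  a1^+2 + a2^+2 = 1 -> b1^+2 + b2^+2 = 1 -> 0 <= a2 -> 0 <= b2 -> b1 <= a1 -> a1 < 1 ->
  b1 < a1*b1 + a2*b2.
Proof.
move=> ha hb ha2 hb2 hab h1.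
have [hb1|hb1] := lerP b1 0.
  have [hb1'|hb1'] := ltrP b1 0. nra.
  have -> : b1 = 0 by apply/le_anti; rewrite hb1 hb1'.
  have hb2' : b2 = 1.
    apply/le_anti; apply/andP; split; [apply: sq_le|apply: sq_le]; nra.
  have ha2' : 0 < a2.
    rewrite lt_def ha2 andbT; apply/eqP=> e. rewrite e in ha. nra.
  nra.
have h : a2 <= b2 by apply: sq_le => //; nra.
nra.
Qed.

Lemma G4 (R : realFieldType) (a1 a2 : R) :
  a1^+2 + a2^+2 = 1 -> a1 <= 1.
Proof. move=> h. nra. Qed.

Lemma algR_le (x y : algR) : (x <= y) = (algRval x <= algRval y). Proof. by []. Qed.
Lemma algR_lt (x y : algR) : (x < y) = (algRval x < algRval y). Proof. by []. Qed.
Lemma algR_eq (x y : algR) : algRval x = algRval y -> x = y. Proof. exact: val_inj. Qed.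
Definition rR (x : algC) : algR := in_algR (Creal_Re x).
Definition iR (x : algC) : algR := in_algR (Creal_Im x).
Lemma norm1R (a : algC) : `|a| = 1 -> rR a ^+ 2 + iR a ^+ 2 = 1.
Proof.
move=> h; apply: algR_eq.
by rewrite rmorphD !rmorphXn /= -normC2_Re_Im h expr1n.
Qed.

Lemma R1C (a b : algC) : `|a| = 1 -> `|b| = 1 -> 0 <= 'Im a -> 0 <= 'Im b ->
  'Re b <= 'Re a -> 0 <= 'Im (b * a^*).
Proof.
move=> ha hb ha2 hb2 hab.
have := G1 (norm1R ha) (norm1R hb) ha2 hb2 hab.
rewrite algR_le /= ImM Re_conj Im_conj.
by rewrite mulrN addrC.
Qed.

Lemma Re_lt1 (a : algC) : `|a| = 1 -> a != 1 -> 'Re a < 1.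
Proof.
move=> ha a1.
have h : 'Re a <= 1 := G4 (norm1R ha).
have n2 : 'Re a ^+2 + 'Im a ^+2 = 1 by rewrite -normC2_Re_Im ha expr1n.
rewrite lt_def h andbT; apply: contra a1 => /eqP e.
have hi : 'Im a = 0.
  move/eqP: n2; rewrite -e expr1n -{2}(addr0 1) (inj_eq (addrI _)) sqrf_eq0.
  by move/eqP.
by rewrite [a]Crect -e hi mulr0 addr0.
Qed.

Lemma R3C (a b : algC) : `|a| = 1 -> `|b| = 1 -> 0 <= 'Im a -> 0 <= 'Im b ->
  'Re b <= 'Re a -> a != 1 -> 'Re b < 'Re (b * a^*).
Proof.
move=> ha hb ha2 hb2 hab a1.
have := G3 (norm1R ha) (norm1R hb) ha2 hb2 hab (Re_lt1 ha a1).
rewrite algR_lt /= ReM Re_conj Im_conj.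
by rewrite mulrN opprK (mulrC ('Re a)) (mulrC ('Im a)).
Qed.

Lemma unit_norm (z : algC) (M : nat) : (0 < M)%N -> z ^+ M = 1 -> `|z| = 1.
Proof.
move=> hM h; apply/eqP; rewrite -(pexpr_eq1 hM) ?normr_ge0 //.
by rewrite -normrX h normr1.
Qed.

Lemma conj_unit (z : algC) : `|z| = 1 -> z * z^* = 1.
Proof. by move=> h; rewrite -normCK h expr1n. Qed.

Lemma conj_pow (z : algC) (M : nat) : (0 < M)%N -> z ^+ M = 1 -> z^* = z ^+ M.-1.
Proof.
move=> hM h.
have z0 : z != 0 by apply/eqP => e; move: h; rewrite e expr0n eqn0Ngt hM => /eqP; rewrite eq_sym oner_eq0.
apply: (mulfI z0); rewrite conj_unit ?(unit_norm hM h) //.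
by rewrite -exprS prednK.
Qed.

Section RootPrim.
Variable M : nat.
Hypothesis hM : (1 < M)%N.
Variable xi : algC.
Hypothesis hxi : M.-primitive_root xi.
Let M0 : (0 < M)%N := ltnW hM.

Definition candP (k : 'I_M) := (0 <= 'Im (xi ^+ k)) && (xi ^+ k != 1).

Lemma xi_ne1 k : (0 < k < M)%N -> xi ^+ k != 1.
Proof.
move=> /andP[k0 kM]; rewrite -(expr0 xi) (eq_prim_root_expr hxi) mod0n modn_small //.
by rewrite -lt0n.
Qed.

Lemma cand_ex : exists k0, candP k0.
Proof.
have hx1 : xi ^+ 1 != 1 by apply: xi_ne1; rewrite hM.
have hxM : xi ^+ M.-1 != 1 by apply: xi_ne1; rewrite prednK // leqnn -subn1 subn_gt0 hM.
have xM := prim_expr_order hxi.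
have [h|h] := lerP (0 : algR) (iR xi).
  by exists (Ordinal hM); rewrite /candP /= hx1 andbT expr1.
have oM : (M.-1 < M)%N by rewrite prednK.
exists (Ordinal oM); rewrite /candP /= hxM andbT -conj_pow //.
by rewrite Im_conj oppr_ge0 ltW.
Qed.


Lemma eta_ex : exists eta : algC, [/\ eta ^+ M = 1, 0 <= 'Im eta, eta != 1 &
   forall w, w ^+ M = 1 -> 0 <= 'Im w -> w != 1 -> 'Re w <= 'Re eta].
Proof.
have [k0 Pk0] := cand_ex.
have [k Pk kmax] := arg_maxP (fun k : 'I_M => rR (xi ^+ k)) Pk0.
exists (xi ^+ k); case/andP: Pk => h1 h2; split => //.
  by rewrite exprAC (prim_expr_order hxi) expr1n.
move=> w wM w0 w1; have [i wi] := prim_rootP hxi wM.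
rewrite wi; apply: (kmax i).
by rewrite /candP -wi w0 w1.
Qed.

Section Eta.
Variable eta : algC.
Hypothesis etaM : eta ^+ M = 1.
Hypothesis eta0 : 0 <= 'Im eta.
Hypothesis eta1 : eta != 1.
Hypothesis etamax : forall w, w ^+ M = 1 -> 0 <= 'Im w -> w != 1 -> 'Re w <= 'Re eta.

Definition Sw (w : algC) := [set k : 'I_M | 'Re w < 'Re (xi ^+ k)].

Lemma step w : w ^+ M = 1 -> 0 <= 'Im w -> w != 1 ->
  exists w', [/\ w' ^+ M = 1, 0 <= 'Im w', w = w' * eta & (#|Sw w'| < #|Sw w|)%N].
Proof.
move=> wM w0 w1.
have hle := etamax wM w0 w1.
have ne := unit_norm M0 etaM; have nw := unit_norm M0 wM.
exists (w * eta^*); split.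
- by rewrite exprMn -rmorphXn etaM rmorph1 wM mulr1.
- exact: R1C.
- by rewrite -mulrA (mulrC _ eta) conj_unit // mulr1.
apply: proper_card; apply/properP; split.
  apply/subsetP => k; rewrite !inE => hk; apply: lt_trans hk.
  exact: R3C.
have w'M : (w * eta^*) ^+ M = 1 by rewrite exprMn -rmorphXn etaM rmorph1 wM mulr1.
have [k' hk'] := prim_rootP hxi w'M.
exists k'; rewrite !inE -hk' ?ltxx //.
exact: R3C.
Qed.

Lemma up_pow n w : w ^+ M = 1 -> 0 <= 'Im w -> (#|Sw w| <= n)%N ->
  exists j, w = eta ^+ j.
Proof.
elim: n w => [|n IH] w wM w0 hc.
  have [->|w1] := eqVneq w 1; first by exists 0%N; rewrite expr0.
  have [w' [_ _ _ hlt]] := step wM w0 w1.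
  by move: hc; rewrite leqNgt (leq_ltn_trans _ hlt).
have [->|w1] := eqVneq w 1; first by exists 0%N; rewrite expr0.
have [w' [w'M w'0 ew hlt]] := step wM w0 w1.
rewrite ew.
have [j ->] := IH w' w'M w'0 (leq_trans hlt hc).
by exists j.+1; rewrite exprSr.
Qed.

Lemma all_pow w : w ^+ M = 1 -> exists j, w = eta ^+ j.
Proof.
move=> wM.
have [h|h] := lerP (0 : algR) (iR w).
  exact: (up_pow wM h (leqnn _)).
have wcM : w^* ^+ M = 1 by rewrite -rmorphXn wM rmorph1.
have wc0 : 0 <= 'Im w^* by rewrite Im_conj oppr_ge0 ltW.
have [j hj] := up_pow wcM wc0 (leqnn _).
exists (M.-1 * j)%N; rewrite -[w]conjCK hj exprM -(conj_pow M0 etaM).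
by rewrite rmorphXn.
Qed.

Lemma eta_prim : M.-primitive_root eta.
Proof.
have [m hm] := all_pow (prim_expr_order hxi).
have [d hd dM] := prim_order_exists M0 etaM.
have Md : (M %| d)%N.
  by rewrite (prim_order_dvd hxi) hm exprAC (prim_expr_order hd) expr1n.
by have /eqP <- : d == M by rewrite eqn_dvd dM Md.
Qed.
End Eta.
End RootPrim.

Lemma eC_prim N : (1 < N)%N -> N.-primitive_root (eC N).
Proof.
move=> hN.
have N0 : (0 < N)%N := ltnW hN.
pose M := (2 * N)%N.
have hM : (1 < M)%N by rewrite /M (leq_trans hN) // leq_pmull.
have [xi hxi] := C_prim_root_exists (ltnW hM).
have [eta [etaM eta0 eta1 etamax]] := eta_ex hM hxi.
have ep := eta_prim hM hxi etaM eta0 eta1 etamax.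
pose rho := N.-root (-1 : algC).
have rN : rho ^+ N = -1 := rootCK N0 (-1).
have rM : rho ^+ M = 1 by rewrite /M mulnC exprM rN sqrrN expr1n.
have r0 : 0 <= 'Im rho := Im_rootC_ge0 _ hN.
have r1 : rho != 1.
  apply/eqP => e; move: rN; rewrite e expr1n => /eqP.
  by rewrite -addr_eq0 -mulr2n pnatr_eq0.
have eN : eta ^+ N = -1.
  have : (eta ^+ N) ^+ 2 == 1 by rewrite -exprM mulnC etaM.
  rewrite sqrf_eq1 => /orP[/eqP h|/eqP //].
  have := prim_order_dvd ep N; rewrite h eqxx => /(dvdn_leq N0).
  by rewrite /M leqNgt ltn_Pmull.
have h1 : 'Re eta <= 'Re rho := rootC_Re_max N0 eN eta0.
have h2 : 'Re rho <= 'Re eta := etamax _ rM r0 r1.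
have nr : `|rho| = 1 := unit_norm (ltnW hM) rM.
have ne : `|eta| = 1 := unit_norm (ltnW hM) etaM.
have e : rho = eta.
  apply: eqC_semipolar; first by rewrite nr ne.
    by apply/le_anti; rewrite h1 h2.
  exact: mulr_ge0.
rewrite /eC -/rho e.
have := exp_prim_root ep 2.
have -> : gcdn 2 M = 2 by apply/gcdn_idPl; rewrite /M dvdn_mulr.
by rewrite /M mulKn.
Qed.

Section Main.
Variable p : nat.
Hypothesis pp : prime p.
Variable c : 'Z_p.
Variables y z : 'I_p -> 'I_p -> 'Z_p.
Hypothesis hyz : forall i j : 'I_p, y i j + c * z i j = (j : nat)%:R.

Let p1 : (1 < p)%N := prime_gt1 pp.
Let p0 : (0 < p)%N := prime_gt0 pp.
Fact pp1 : (1 < p ^ 2)%N.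
Proof. by rewrite (leq_trans p1) // -mulnn leq_pmulr // ltnW. Qed.

Lemma valZ (a : 'Z_p) : (a < p)%N.
Proof. by rewrite -{2}(Zp_cast p1) ltn_ord. Qed.

Lemma val2 (a b : nat) : (a < p)%N -> (b < p)%N ->
  ((a + p * b)%N%:R : 'Z_(p ^ 2)) = (a + p * b)%N :> nat.
Proof.
move=> ha hb; rewrite val_Zp_nat ?pp1 // modn_small //.
have : (a + p * b < p + p * b)%N by rewrite ltn_add2r.
move=> h; apply: (leq_trans h); rewrite -mulnS expnS leq_mul2l.
by rewrite hb orbT.
Qed.

Lemma natZp (a b : nat) : (a%:R : 'Z_p) = b%:R -> (a %% p = b %% p)%N.
Proof. by move=> /(congr1 val); rewrite /= !val_Zp_nat. Qed.

Lemma decomp (a b a' b' : nat) : (a < p)%N -> (a' < p)%N ->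
  (a + p * b = a' + p * b')%N -> a = a' /\ b = b'.
Proof.
move=> ha ha' e.
have e1 : a = a'.
  by move: (congr1 (modn^~ p) e) => /=; rewrite !(mulnC p) (addnC a) (addnC a') !modnMDl !modn_small.
split=> //; move: e; rewrite e1 => /addnI /eqP; rewrite eqn_mul2l.
by rewrite eqn0Ngt p0 /= => /eqP.
Qed.

Definition bel (x : 'I_p * 'I_p) : Gp p :=
  ((((x.1 : nat) + p * (y x.1 x.2 : nat))%N)%:R : 'Z_(p ^ 2), z x.1 x.2).

Lemma bel_inj : injective bel.
Proof.
move=> [i j] [i' j'] /= [e1 e2].
move: e1; move/(congr1 (@nat_of_ord _)); rewrite !val2 ?valZ //.
move=> /decomp [] // ei ey; move: ei ey e2 => /val_inj ei; subst i'.
move=> /val_inj ey ez.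
have := hyz i j; rewrite ey ez hyz => /natZp.
by rewrite !modn_small // => /val_inj ->.
Qed.

Lemma BsetE : Bset y z = [set bel x | x : 'I_p * 'I_p].
Proof.
apply/setP => g; apply/imset2P/imsetP.
  by case=> i j _ _ ->; exists (i, j).
by move=> [[i j] _ ->]; exact: (@Imset2spec _ _ _ _ _ _ _ i j).
Qed.

Lemma sumB (F : Gp p -> algC) :
  \sum_(b in Bset y z) F b = \sum_(i < p) \sum_(j < p) F (bel (i, j)).
Proof.
rewrite BsetE big_imset /=; last by move=> x1 x2 _ _; apply: bel_inj.
by rewrite pair_big /=.
Qed.


Definition lam (x : 'I_p * 'I_p) : Gp p :=
  ((((x.1 : nat) + p * x.2)%N)%:R : 'Z_(p ^ 2), c * ((x.1 : nat)%:R)).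

Lemma lam_inj : injective lam.
Proof.
move=> [r s] [r' s'] /= [e1 _].
move: e1; move/(congr1 (@nat_of_ord _)); rewrite !val2 //.
by move=> /decomp [] // /val_inj -> /val_inj ->.
Qed.

Definition Lset := [set lam x | x : 'I_p * 'I_p].

Lemma sumL (F : Gp p -> algC) :
  \sum_(l in Lset) F l = \sum_(r < p) \sum_(s < p) F (lam (r, s)).
Proof.
rewrite big_imset /=; last by move=> x1 x2 _ _; apply: lam_inj.
by rewrite pair_big /=.
Qed.

Definition om := eC (p ^ 2).
Definition ze := om ^+ p.

Lemma om_prim : (p ^ 2).-primitive_root om.
Proof. exact: eC_prim pp1. Qed.

Lemma ze_prim : p.-primitive_root ze.
Proof.
have := exp_prim_root om_prim p.
have -> : gcdn p (p ^ 2) = p by apply/gcdn_idPl; rewrite dvdn_exp.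
by rewrite -mulnn mulKn.
Qed.

Lemma keyK (i j r s : 'I_p) :
  chi (lam (r, s)) (bel (i, j)) = om ^+ (i * r) * ze ^+ (r * j + i * s).
Proof.
rewrite /chi /= !val2 ?valZ //.
set m := nat_of_ord (c * (r : nat)%:R).
set Y := nat_of_ord (y i j); set Z := nat_of_ord (z i j).
have E : ((i + p * Y) * (r + p * s) + p * (Z * m) =
   i * r + p * (Y * r + Z * m + i * s) + p ^ 2 * (Y * s))%N by rewrite expnS expn1; nia.
rewrite -/om E exprD exprD [om ^+ (p * _)]exprM [om ^+ (p ^ 2 * _)]exprM.
rewrite (prim_expr_order om_prim) expr1n mulr1 -/ze.
have hm : ((Y * r + Z * m) %% p = (r * j) %% p)%N.
  apply: natZp.
  rewrite natrD !natrM /Y /Z /m !natr_Zp.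
  have := hyz i j => h.
  rewrite -[X in _ = _ * X]h.
  ring.
congr (_ * _); apply/eqP; rewrite (eq_prim_root_expr ze_prim).
by rewrite -modnDm -[X in _ == X]modnDm hm.
Qed.


Lemma omP : om ^+ (p ^ 2) = 1. Proof. exact: prim_expr_order om_prim. Qed.
Lemma zeP : ze ^+ p = 1. Proof. exact: prim_expr_order ze_prim. Qed.

Lemma norm_om k : `|om ^+ k| = 1.
Proof. apply: (unit_norm (ltnW pp1)); by rewrite exprAC omP expr1n. Qed.
Lemma norm_ze k : `|ze ^+ k| = 1.
Proof. apply: (unit_norm p0); by rewrite exprAC zeP expr1n. Qed.

Lemma GS (u : algC) : u ^+ p = 1 ->
  \sum_(j < p) u ^+ j = if u == 1 then p%:R else 0.
Proof.
move=> up; have [->|u1] := eqVneq u 1.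
  by rewrite (eq_bigr (fun _ => 1)) ?sumr_const ?card_ord // => j _; rewrite expr1n.
have : (u - 1) * \sum_(j < p) u ^+ j = 0 by rewrite -subrX1 up subrr.
by move/eqP; rewrite mulf_eq0 subr_eq0 (negbTE u1) /= => /eqP.
Qed.

Lemma UC (x w : algC) : `|x| = 1 -> `|w| = 1 -> (x * w^* == 1) = (x == w).
Proof.
move=> hx hw; apply/eqP/eqP => [e|->]; last exact: conj_unit.
by rewrite -[x]mulr1 -(conj_unit hw) mulrCA e mulr1.
Qed.

Lemma ze_eq (a b : 'I_p) : (ze ^+ a == ze ^+ b) = (a == b).
Proof. by rewrite (eq_prim_root_expr ze_prim) !modn_small. Qed.

Lemma ze_u (a b : 'I_p) : (ze ^+ a * (ze ^+ b)^* == 1) = (a == b).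
Proof. by rewrite UC ?norm_ze // ze_eq. Qed.

Lemma zu_p (a b : 'I_p) : (ze ^+ a * (ze ^+ b)^*) ^+ p = 1.
Proof.
by rewrite exprMn -rmorphXn (exprAC ze a) (exprAC ze b) zeP !expr1n rmorph1 mulr1.
Qed.

Lemma term_gen (O Z : algC) (i j r s r' s' : nat) :
  O ^+ (i * r) * Z ^+ (r * j + i * s) * (O ^+ (i * r') * Z ^+ (r' * j + i * s'))^* =
  (O ^+ (i * r) * (O ^+ (i * r'))^* * (Z ^+ s * (Z ^+ s')^*) ^+ i) *
  (Z ^+ r * (Z ^+ r')^*) ^+ j.
Proof.
rewrite rmorphM !rmorphXn !exprMn -!exprM !exprD.
rewrite (mulnC s i) (mulnC s' i).
ring.
Qed.

Lemma dual_gen (O Z : algC) (i j i' j' r s : nat) :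
  O ^+ (i * r) * Z ^+ (r * j + i * s) * (O ^+ (i' * r) * Z ^+ (r * j' + i' * s))^* =
  (O ^+ (i * r) * (O ^+ (i' * r))^* * (Z ^+ j * (Z ^+ j')^*) ^+ r) *
  (Z ^+ i * (Z ^+ i')^*) ^+ s.
Proof.
rewrite rmorphM !rmorphXn !exprMn -!exprM !exprD.
rewrite (mulnC j r) (mulnC j' r).
ring.
Qed.

Lemma ortho (r s r' s' : 'I_p) : (r, s) != (r', s') ->
  \sum_(b in Bset y z) chi (lam (r, s)) b * (chi (lam (r', s')) b)^* = 0.
Proof.
move=> ne; rewrite sumB.
under eq_bigr => i _ do under eq_bigr => j _ do rewrite keyK keyK term_gen.
under eq_bigr => i _ do rewrite -mulr_sumr GS ?zu_p // ze_u.
have [er|nr] := eqVneq r r'; last by rewrite big1 // => i _; rewrite mulr0.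
subst r'.
have ns : s != s' by apply: contra ne => /eqP ->.
rewrite -mulr_suml.
under eq_bigr => i _ do rewrite conj_unit ?norm_om // mul1r.
by rewrite GS ?zu_p // ze_u (negbTE ns) mul0r.
Qed.

Lemma dual (i j i' j' : 'I_p) :
  \sum_(l in Lset) chi l (bel (i, j)) * (chi l (bel (i', j')))^* =
  if (i, j) == (i', j') then (p ^ 2)%:R else 0.
Proof.
rewrite sumL.
under eq_bigr => r _ do under eq_bigr => s _ do rewrite keyK keyK dual_gen.
under eq_bigr => r _ do rewrite -mulr_sumr GS ?zu_p // ze_u.
have [ei|ni] := eqVneq i i'; last first.
  rewrite big1; last by move=> r _; rewrite mulr0.
  case: eqP => // [[e _]]; by rewrite e eqxx in ni.
subst i'.
rewrite -mulr_suml.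
under eq_bigr => r _ do rewrite conj_unit ?norm_om // mul1r.
rewrite GS ?zu_p // ze_u.
have [ej|nj] := eqVneq j j'.
  by subst j'; rewrite eqxx -natrM mulnn.
rewrite mul0r; case: eqP => // [[e]]; by rewrite e eqxx in nj.
Qed.

Lemma norm_chi (l b : Gp p) : `|chi l b| = 1.
Proof. exact: norm_om. Qed.

Lemma ortho' l l' : l \in Lset -> l' \in Lset -> l != l' ->
  \sum_(b in Bset y z) chi l b * (chi l' b)^* = 0.
Proof.
move=> /imsetP [[r s] _ ->] /imsetP [[r' s'] _ ->] ne.
apply: ortho; apply: contra ne => /eqP -> //.
Qed.

Lemma dual' b b' : b \in Bset y z -> b' \in Bset y z ->
  \sum_(l in Lset) chi l b * (chi l b')^* = if b == b' then (p ^ 2)%:R else 0.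
Proof.
rewrite BsetE => /imsetP [[i j] _ ->] /imsetP [[i' j'] _ ->].
by rewrite dual (inj_eq bel_inj).
Qed.

Lemma P0 : ((p ^ 2)%:R : algC) != 0.
Proof. by rewrite pnatr_eq0 -lt0n expn_gt0 p0. Qed.

Lemma B0 : ((#|Bset y z|)%:R : algC) != 0.
Proof.
rewrite pnatr_eq0 -lt0n card_gt0; apply/set0Pn.
exists (bel (Ordinal p0, Ordinal p0)); rewrite BsetE.
by apply/imsetP; exists (Ordinal p0, Ordinal p0).
Qed.

Lemma spectral : is_spectral (Bset y z).
Proof.
exists Lset; split.
- exact: ortho'.
- move=> a H l0 l0L.
  have S : \sum_(b in Bset y z) \sum_(l in Lset) a l * chi l b * (chi l0 b)^* = 0.
    by apply: big1 => b hb; rewrite -mulr_suml H // mul0r.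
  rewrite exchange_big /= (bigD1 l0) //= in S.
  have Z : \sum_(i in Lset | i != l0) \sum_(b in Bset y z) a i * chi i b * (chi l0 b)^* = 0.
    apply: big1 => l /andP [lL nl].
    under eq_bigr do rewrite -mulrA.
    by rewrite -mulr_sumr ortho' // mulr0.
  rewrite Z addr0 in S.
  have E : \sum_(b in Bset y z) a l0 * chi l0 b * (chi l0 b)^* = a l0 * (#|Bset y z|)%:R.
    transitivity (\sum_(b in Bset y z) a l0).
      by apply: eq_bigr => b _; rewrite -mulrA conj_unit ?norm_chi // mulr1.
    by rewrite sumr_const mulr_natr.
  move: S; rewrite E => /eqP; rewrite mulf_eq0 (negbTE B0) orbF.
  by move/eqP.
- move=> f.
  exists (fun l => (\sum_(b' in Bset y z) f b' * (chi l b')^*) / (p ^ 2)%:R).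
  move=> b hb.
  symmetry.
  rewrite (eq_bigr (fun l => \sum_(b' in Bset y z) f b' / (p ^ 2)%:R * (chi l b * (chi l b')^*))); last first.
    move=> l _; rewrite mulr_suml mulr_suml; apply: eq_bigr => b' _; ring.
  rewrite exchange_big /=.
  rewrite (eq_bigr (fun b' => f b' / (p ^ 2)%:R * (if b == b' then (p ^ 2)%:R else 0))); last first.
    by move=> b' hb'; rewrite -mulr_sumr dual'.
  rewrite (bigD1 b) //= eqxx big1 ?addr0; last first.
    by move=> b' /andP [_ nb]; rewrite eq_sym (negbTE nb) mulr0.
  by rewrite mulfVK // P0.
Qed.

Lemma valD (a m : 'Z_p) : nat_of_ord (a + m)%R = (((a : nat) + m) %% p)%N.
Proof. by rewrite -[a]natr_Zp -[m]natr_Zp -natrD val_Zp_nat // !natr_Zp. Qed.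

Lemma add1 (i : nat) (a m : 'Z_p) : (i < p)%N ->
  ((i + p * a)%N%:R : 'Z_(p ^ 2)) + ((p * m)%N%:R) = ((i + p * (a + m)%R)%N%:R).
Proof.
move=> hi.
rewrite -natrD -addnA -mulnDr -[LHS]Zp_nat_mod ?pp1 // -[RHS]Zp_nat_mod ?pp1 //.
by rewrite valD muln_modr mulnn modnDmr.
Qed.

Definition tt (k : 'Z_p) : Gp p := (((p * (- (c * k))%R)%N)%:R : 'Z_(p ^ 2), k).
Definition Tset := [set tt k | k : 'Z_p].

Lemma belD (i j : 'I_p) (k : 'Z_p) :
  bel (i, j) + tt k =
  ((((i : nat) + p * (y i j + - (c * k))%R)%N)%:R : 'Z_(p ^ 2), z i j + k).
Proof.
have pairD : forall (a a' : 'Z_(p ^ 2)) (b b' : 'Z_p),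
  ((a, b) : Gp p) + ((a', b') : Gp p) = (a + a', b + b') by [].
by rewrite /bel /tt pairD add1.
Qed.

Lemma fst_inj (i i' : 'I_p) (A A' : 'Z_p) :
  ((i + p * A)%N%:R : 'Z_(p ^ 2)) = ((i' + p * A')%N%:R) -> i = i' /\ A = A'.
Proof.
move/(congr1 (@nat_of_ord _)); rewrite !val2 ?valZ //.
by move=> /decomp [] // /ord_inj -> /ord_inj ->.
Qed.

Lemma uniq_dec (i j i' j' : 'I_p) (k k' : 'Z_p) :
  bel (i, j) + tt k = bel (i', j') + tt k' -> [/\ i = i', j = j' & k = k'].
Proof.
rewrite !belD => e.
have [ei ev] := fst_inj (congr1 fst e); subst i'.
have e2 : (z i j + k = z i j' + k')%R := congr1 snd e.
have hj : ((j : nat)%:R : 'Z_p) = (j' : nat)%:R.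
  rewrite -(hyz i j) -(hyz i j').
  transitivity ((y i j + - (c * k)) + c * (z i j + k))%R; first by ring.
  rewrite ev e2; ring.
have ej : j = j' by apply/val_inj; move: (natZp hj); rewrite !modn_small.
subst j'; split => //; exact: (addrI _ e2).
Qed.

Lemma valZ2 (a : 'Z_(p ^ 2)) : (a < p * p)%N.
Proof. by rewrite mulnn -{2}(Zp_cast pp1) ltn_ord. Qed.

Lemma tile : is_tile (Bset y z).
Proof.
exists Tset => g.
have hg : g = (g.1, g.2) by case: g.
have g1lt : (g.1 < p * p)%N := valZ2 g.1.
pose u := (g.1 %% p)%N; pose v := (g.1 %/ p)%N.
have hu : (u < p)%N by apply: ltn_pmod.
have hv : (v < p)%N by rewrite ltn_divLR.
pose i := Ordinal hu.
pose w : 'Z_p := (v%:R + c * g.2)%R.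
pose j := Ordinal (valZ w).
pose k : 'Z_p := (g.2 - z i j)%R.
have E1 : g = bel (i, j) + tt k.
  rewrite belD [LHS]hg; congr pair; last by rewrite /k addrC subrK.
  have ey : (y i j + - (c * k))%R = v%:R.
    have hj : ((j : nat)%:R : 'Z_p) = w by rewrite natr_Zp.
    transitivity ((y i j + c * z i j) - c * g.2)%R; first by rewrite /k; ring.
    by rewrite hyz hj /w; ring.
  rewrite ey val_Zp_nat // modn_small // /u /v.
  by rewrite mulnC addnC -divn_eq natr_Zp.
exists (bel (i, j), tt k); split.
  split => //; last by apply/imsetP; exists k.
  by rewrite BsetE; apply/imsetP; exists (i, j).
move=> [b' t'] /= [hb' ht' e].
move: hb' ht' e; rewrite BsetE => /imsetP [[i' j'] _ ->] /imsetP [k' _ ->] e.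
have [-> -> ->] := uniq_dec (etrans (esym E1) e).
by [].
Qed.

End Main.

Theorem lemma5p5 (p : nat) (pp : prime p) (c : 'Z_p)
  (y z : 'I_p -> 'I_p -> 'Z_p)
  (hyz : forall i j : 'I_p, y i j + c * z i j = (j : nat)%:R) :
  is_tile (Bset y z) /\ is_spectral (Bset y z).
Proof. split; [exact: tile hyz | exact: spectral hyz]. Qed.
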